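(* In the sigmoid setting with algorithm RCDB-S described in the context, suppose the events $\mathcal E_1=\{\|\theta^*-\theta_t\|_{\Sigma_t}\le\beta_t\ \forall t\}$ and $\mathcal E_2=\{\|\theta^*-\theta_t\|_{\Lambda_t}\le\tilde\beta_t\ \forall t\}$ hold. Then for every $t\in[T]$: (i) $v_t\le\dot\sigma\big((\phi(x_t,a_t)-\phi(x_t,b_t))^\top\theta^*\big)$; and (ii) the per-round regret satisfies $$2r^*(x_t,a_t^* )-r^*(x_t,a_t)-r^*(x_t,b_t)\le2\tilde\beta_t\|\phi(x_t,a_t)-\phi(x_t,b_t)\|_{\Lambda_t^{-1}}.$$
   Context: Sigmoid setting. Context set $\mathcal X$, action set $\mathcal A$, known feature map $\phi:\mathcal X\times\mathcal A\to\mathbb R^d$ with $\|\phi(x,a)\|_2\le1$; unknown $\theta^*$ with $\|\theta^*\|_2\le B$; reward $r^*(x,a)=\langle\theta^*,\phi(x,a)\rangle$; $a_t^*=\arg\max_a r^*(x_t,a)$. Link function $\sigma(z)=1/(1+e^{-z})$, $\dot\sigma(z)=e^{-z}/(1+e^{-z})^2$, and $\kappa>0$ is a constant with $\dot\sigma(\langle\phi(x,a)-\phi(x,b),\theta\rangle)\ge\kappa$ for all $x,a,b$ and $\|\theta\|_2\le B$. In each round $t$: context $x_t$ revealed, agent picks $a_t,b_t$; a true label $l_t\in\{0,1\}$ with $\Pr(l_t=1\mid\text{past},x_t,a_t,b_t)=\sigma(\langle\phi(x_t,a_t)-\phi(x_t,b_t),\theta^*\rangle)$; an adversary seeing $x_t,a_t,b_t,l_t$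 chooses $c_t\in\{0,1\}$; agent observes $o_t=l_t$ if $c_t=0$, $o_t=1-l_t$ if $c_t=1$. Notation $\phi_i=\phi(x_i,a_i)-\phi(x_i,b_i)$, $\|v\|_M=\sqrt{v^\top Mv}$. Algorithm RCDB-S (parameters $\alpha>0$, $\lambda>0$, $\kappa$, positive radii $\beta_t,\tilde\beta_t$): for $t=1,\dots,T$: (1) $\Sigma_t=\lambda I+\sum_{i=1}^{t-1}w_i\kappa\,\phi_i\phi_i^\top$ and $\Lambda_t=\lambda I+\sum_{i=1}^{t-1}w_iv_i\,\phi_i\phi_i^\top$; (2) $\theta_t$ solves $\lambda\theta+\sum_{i=1}^{t-1}w_i(\sigma(\phi_i^\top\theta)-o_i)\phi_i=0$; (3) observe $x_t$, choose $(a_t,b_t)\in\arg\max_{a,b}\{(\phi(x_t,a)+\phi(x_t,b))^\top\theta_t+\tilde\beta_t\|\phi(x_t,a)-\phi(x_t,b)\|_{\Lambda_t^{-1}}\}$; (4) observe $o_t$, set $w_t=\min\{1,\alpha/\|\phi_t\|_{\Sigma_t^{-1}}\}$; (5) set $\hat\Delta_t=|\phi_t^\top\theta_t|+\beta_t\|\phi_t\|_{\Sigma_t^{-1}}$ and $v_t=\max\{\kappa,\dot\sigma(\hat\Delta_t)\}$. *)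

(* Defs.v *)
From HB Require Import structures.
From mathcomp Require Import all_boot all_order all_algebra.
From mathcomp Require Import reals sequences exp.

Set Implicit Arguments.
Unset Strict Implicit.
Unset Printing Implicit Defensive.

Import Order.TTheory GRing.Theory Num.Theory.
Local Open Scope ring_scope.

Section Defs.
Variable R : realType.

Definition sigmoid (z : R) : R := 1 / (1 + expR (- z)).
Definition dsigmoid (z : R) : R := expR (- z) / (1 + expR (- z)) ^+ 2.

Variable d : nat.

Definition inner (u v : 'cV[R]_d) : R := (u^T *m v) 0 0.
Definition norm2 (v : 'cV[R]_d) : R := Num.sqrt (inner v v).
Definition mnorm (M : 'M[R]_d) (v : 'cV[R]_d) : R :=
  Num.sqrt ((v^T *m M *m v) 0 0).

Variables (X A : Type) (phi : X -> A -> 'cV[R]_d).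
Variables (x : nat -> X) (a b : nat -> A).

Definition dphi (i : nat) : 'cV[R]_d := phi (x i) (a i) - phi (x i) (b i).

Definition SigmaM (lambda kappa : R) (w : nat -> R) (t : nat) : 'M[R]_d :=
  lambda%:M + \sum_(1 <= i < t) (w i * kappa) *: (dphi i *m (dphi i)^T).

Definition LambdaM (lambda : R) (w v : nat -> R) (t : nat) : 'M[R]_d :=
  lambda%:M + \sum_(1 <= i < t) (w i * v i) *: (dphi i *m (dphi i)^T).

Definition mle_eq (lambda : R) (w : nat -> R) (o : nat -> bool) (t : nat)
    (th : 'cV[R]_d) : Prop :=
  lambda *: th + \sum_(1 <= i < t)
     (w i * (sigmoid (inner (dphi i) th) - (o i)%:R)) *: dphi i = 0.

End Defs.

(* Main.v *)
Require Import Defs.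
From HB Require Import structures.
From mathcomp Require Import all_boot all_order all_algebra.
From mathcomp Require Import reals sequences exp.
From mathcomp Require Import ring lra.

Import Order.TTheory GRing.Theory Num.Theory.
Local Open Scope ring_scope.

Section Aux.
Variable R : realType.

Lemma mx11_tr (M : 'M[R]_1) : M^T 0 0 = M 0 0.
Proof. by rewrite mxE. Qed.

Variable d : nat.

Lemma inner_sym (u v : 'cV[R]_d) : inner u v = inner v u.
Proof. by rewrite /inner -mx11_tr trmx_mul trmxK. Qed.

Lemma innerDl (u v z : 'cV[R]_d) : inner (u + v) z = inner u z + inner v z.
Proof. by rewrite /inner linearD /= mulmxDl mxE. Qed.

Lemma innerBl (u v z : 'cV[R]_d) : inner (u - v) z = inner u z - inner v z.
Proof. by rewrite /inner linearB /= mulmxBl !mxE. Qed.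

Lemma innerBr (u v z : 'cV[R]_d) : inner z (u - v) = inner z u - inner z v.
Proof. by rewrite /inner mulmxBr !mxE. Qed.

Lemma quad_disc (p q r : R) : 0 <= p -> 0 <= q ->
  (forall s, 0 <= p + s * (2 * r) + s ^+ 2 * q) -> r ^+ 2 <= p * q.
Proof.
move=> p0 q0 H.
have [q0'|qn0] := eqVneq q 0.
  rewrite q0'; have [->|rn0] := eqVneq r 0; first by rewrite expr0n /= mulr0.
  have := H (- (p + 1) / (2 * r)); rewrite q0'.
  have -> : p + - (p + 1) / (2 * r) * (2 * r) + (- (p + 1) / (2 * r)) ^+ 2 * 0 = -1.
    by field; rewrite ?rn0 ?pnatr_eq0 ?andbT //=.
  by rewrite ler0N1.
have qp : 0 < q by rewrite lt_def qn0.
have := H (- r / q).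
have -> : p + - r / q * (2 * r) + (- r / q) ^+ 2 * q = (p * q - r ^+ 2) / q by field.
by rewrite pmulr_lge0 ?invr_gt0 // subr_ge0.
Qed.

Lemma sum_sq_ge0 (y : 'cV[R]_d) : 0 <= (y^T *m y) 0 0.
Proof. rewrite mxE; apply: sumr_ge0 => i _; rewrite mxE -expr2; exact: sqr_ge0. Qed.

End Aux.

Section Aux2.
Variable R : realType.
Variable d : nat.

Definition Gm (lam : R) (c : nat -> R) (f : nat -> 'cV[R]_d) (t : nat) : 'M[R]_d :=
  lam%:M + \sum_(1 <= i < t) c i *: (f i *m (f i)^T).

Lemma Gm_sym lam c f t : (Gm lam c f t)^T = Gm lam c f t.
Proof.
rewrite /Gm linearD /= tr_scalar_mx raddf_sum /=; congr (_ + _).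
by apply: eq_bigr => i _; rewrite linearZ /= trmx_mul trmxK.
Qed.

Lemma mul11 (A B : 'M[R]_1) : (A *m B) 0 0 = A 0 0 * B 0 0.
Proof. by rewrite mxE big_ord1. Qed.

Lemma Gm_quad lam c f t (y : 'cV[R]_d) :
  (forall i, (1 <= i < t)%N -> 0 <= c i) ->
  lam * (y^T *m y) 0 0 <= (y^T *m Gm lam c f t *m y) 0 0.
Proof.
move=> c0; set Q := (y^T *m y) 0 0.
rewrite /Gm mulmxDr mulmxDl mul_mx_scalar -scalemxAl mxE.
rewrite [X in _ <= X + _]mxE lerDl.
rewrite mulmx_sumr mulmx_suml summxE big_nat_cond; apply: sumr_ge0 => i /andP[Hi _].
rewrite -scalemxAr -scalemxAl mxE !mulmxA -(mulmxA (y^T *m f i)) mul11.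
have -> : ((f i)^T *m y) 0 0 = (y^T *m f i) 0 0 by rewrite -mx11_tr trmx_mul trmxK.
rewrite -expr2; apply: mulr_ge0; [exact: c0 |exact: sqr_ge0].
Qed.

Lemma Gm_psd lam c f t (y : 'cV[R]_d) : 0 <= lam ->
  (forall i, (1 <= i < t)%N -> 0 <= c i) -> 0 <= (y^T *m Gm lam c f t *m y) 0 0.
Proof.
move=> l0 c0; apply: le_trans (Gm_quad lam c f t y c0); apply: mulr_ge0 => //; exact: sum_sq_ge0.
Qed.

Lemma Gm_unit lam c f t : 0 < lam ->
  (forall i, (1 <= i < t)%N -> 0 <= c i) -> Gm lam c f t \in unitmx.
Proof.
move=> l0 c0; rewrite unitmxE unitfE; apply/negP => /det0P [v vn0 vM].
have := Gm_quad lam c f t (v^T) c0; rewrite trmxK vM mul0mx [X in _ <= X]mxE.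
rewrite pmulr_rle0 // mxE => H.
have Hs : \sum_j v 0 j * v^T j 0 = 0.
  apply/eqP; rewrite eq_le H sumr_ge0 // => k _; by rewrite !mxE -expr2 sqr_ge0.
move/negP: vn0; apply; apply/eqP/matrixP => i j; rewrite (ord1 i) [RHS]mxE.
have nn : forall k : 'I_d, true -> 0 <= v 0 k * v^T k 0.
  by move=> k _; rewrite !mxE -expr2 sqr_ge0.
have := psumr_eq0P nn Hs (i := j) isT.
by rewrite !mxE -expr2 => /eqP; rewrite sqrf_eq0 => /eqP.
Qed.

Lemma cs_gen (M : 'M[R]_d) (u z : 'cV[R]_d) : M^T = M ->
  (forall y : 'cV[R]_d, 0 <= (y^T *m M *m y) 0 0) -> M \in unitmx ->
  `|inner u z| <= mnorm (invmx M) u * mnorm M z.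
Proof.
move=> Ms psd Mu.
have canc : forall (a : 'rV[R]_d) (b : 'cV[R]_d), a *m invmx M *m M *m b = a *m b.
  by move=> a b; rewrite -(mulmxA a) mulVmx // mulmx1.
pose y := (invmx M)^T *m u.
have er : (y^T *m M *m z) 0 0 = inner u z.
  by rewrite /y trmx_mul trmxK canc.
have er' : (z^T *m M *m y) 0 0 = inner u z.
  by rewrite -er -mx11_tr !trmx_mul !trmxK Ms !mulmxA.
have ep : (y^T *m M *m y) 0 0 = (u^T *m invmx M *m u) 0 0.
  rewrite /y trmx_mul trmxK canc.
  by rewrite -mx11_tr !trmx_mul !trmxK.
set p := (y^T *m M *m y) 0 0.
set q := (z^T *m M *m z) 0 0.
have H : (inner u z) ^+ 2 <= p * q.
  apply: quad_disc; [exact: psd | exact: psd | move=> s].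
  have := psd (y + s *: z).
  rewrite !linearD /= !linearZ /= ?mulmxDl ?mulmxDr -!scalemxAl.
  move: er er'; rewrite /p /q.
  set P1 := y^T *m M *m y; set P2 := z^T *m M *m y; set P3 := y^T *m M *m z;
  set P4 := z^T *m M *m z => e1 e2.
  have aE : forall A B : 'M[R]_1, (A + B) 0 0 = A 0 0 + B 0 0 by move=> A B; rewrite mxE.
  have sE : forall (k : R) (A : 'M[R]_1), (k *: A) 0 0 = k * A 0 0 by move=> k A; rewrite mxE.
  rewrite !aE !sE [(P3 + _) 0 0]mxE [(_ *: P4) 0 0]mxE e1 e2 => h.
  lra.
rewrite /mnorm -ep -/p -/q -sqrtrM ?psd //.
by rewrite -(sqrtr_sqr (inner u z)) ler_sqrt // mulr_ge0 ?psd.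
Qed.

End Aux2.

Section Aux3.
Variable R : realType.

Lemma dsig_alt (z : R) : dsigmoid z = 1 / (expR z + expR (- z) + 2).
Proof.
rewrite /dsigmoid expRN.
have E0 : expR z != 0 by rewrite gt_eqF // expR_gt0.
have E1 : 1 + (expR z)^-1 != 0 by rewrite gt_eqF // ltr_wpDr ?invr_ge0 ?expR_ge0.
have E2 : expR z + (expR z)^-1 + 2 != 0.
  by rewrite gt_eqF // ltr_wpDl // addr_ge0 ?invr_ge0 ?expR_ge0.
field; have Ep := expR_gt0 z.
by apply/and3P; split; rewrite gt_eqF //; nra.
Qed.

Lemma cosh_abs (z : R) : expR z + expR (- z) = expR `|z| + expR (- `|z|).
Proof.
have [z0|z0] := lerP 0 z; first by rewrite ger0_norm.
by rewrite ltr0_norm // opprK addrC.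
Qed.

Lemma cosh_mono (s t : R) : 0 <= s -> s <= t ->
  expR s + expR (- s) <= expR t + expR (- t).
Proof.
move=> s0 st; rewrite !expRN.
have Es : 1 <= expR s by rewrite -expR0 ler_expR.
have Est : expR s <= expR t by rewrite ler_expR.
have Et : 1 <= expR t by apply: le_trans Est.
rewrite -subr_ge0.
have -> : expR t + (expR t)^-1 - (expR s + (expR s)^-1)
    = (expR t - expR s) * (expR s * expR t - 1) / (expR s * expR t).
  field; have := expR_gt0 s; have := expR_gt0 t; move=> ? ?.
  by apply/andP; split; rewrite gt_eqF //; nra.
apply: divr_ge0; last by rewrite mulr_ge0 ?expR_ge0.
apply: mulr_ge0; rewrite subr_ge0 //.
by rewrite -[1]mulr1 ler_pM.
Qed.

Lemma dsig_mono (z w : R) : `|z| <= `|w| -> dsigmoid w <= dsigmoid z.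
Proof.
move=> zw; rewrite !dsig_alt !div1r.
have pos : forall u : R, 0 < expR u + expR (- u) + 2.
  by move=> u; rewrite ltr_wpDl // addr_ge0 ?expR_ge0.
rewrite lef_pV2 ?posrE ?pos // lerD2r cosh_abs (cosh_abs w).
exact: cosh_mono.
Qed.

End Aux3.
Theorem mainTheorem8
  (R : realType) (d : nat) (X A : Type)
  (phi : X -> A -> 'cV[R]_d) (thetastar : 'cV[R]_d) (B kappa : R)
  (alpha lambda : R) (beta betat : nat -> R) (T : nat)
  (x : nat -> X) (a b astar : nat -> A) (l c o : nat -> bool)
  (theta : nat -> 'cV[R]_d) (w v : nat -> R) :
  (forall (y : X) (e : A), norm2 (phi y e) <= 1) ->
  norm2 thetastar <= B ->
  0 < kappa ->
  (forall (y : X) (e f : A) (th : 'cV[R]_d), norm2 th <= B ->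
      kappa <= dsigmoid (inner (phi y e - phi y f) th)) ->
  0 < alpha -> 0 < lambda ->
  (forall t, 0 < beta t) -> (forall t, 0 < betat t) ->
  (forall t (e : A), (1 <= t <= T)%N ->
      inner thetastar (phi (x t) e) <= inner thetastar (phi (x t) (astar t))) ->
  (forall t, o t = (if c t then ~~ l t else l t)) ->
  (forall t, (1 <= t <= T)%N -> mle_eq phi x a b lambda w o t (theta t)) ->
  (forall t, (1 <= t <= T)%N -> forall (e f : A),
      inner (phi (x t) e + phi (x t) f) (theta t)
        + betat t * mnorm (invmx (LambdaM phi x a b lambda w v t))
                          (phi (x t) e - phi (x t) f)
      <= inner (phi (x t) (a t) + phi (x t) (b t)) (theta t)
        + betat t * mnorm (invmx (LambdaM phi x a b lambda w v t))
                          (phi (x t) (a t) - phi (x t) (b t))) ->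
  (forall t, (1 <= t <= T)%N ->
      w t = (let nr := mnorm (invmx (SigmaM phi x a b lambda kappa w t))
                              (dphi phi x a b t) in
             if nr == 0 then 1 else Num.min 1 (alpha / nr))) ->
  (forall t, (1 <= t <= T)%N ->
      v t = Num.max kappa
              (dsigmoid (`|inner (dphi phi x a b t) (theta t)|
                 + beta t * mnorm (invmx (SigmaM phi x a b lambda kappa w t))
                                  (dphi phi x a b t)))) ->
  (forall t, (1 <= t <= T)%N ->
      mnorm (SigmaM phi x a b lambda kappa w t) (thetastar - theta t) <= beta t) ->
  (forall t, (1 <= t <= T)%N ->
      mnorm (LambdaM phi x a b lambda w v t) (thetastar - theta t) <= betat t) ->
  forall t, (1 <= t <= T)%N ->
    v t <= dsigmoid (inner (phi (x t) (a t) - phi (x t) (b t)) thetastar)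
    /\ 2 * inner thetastar (phi (x t) (astar t))
         - inner thetastar (phi (x t) (a t)) - inner thetastar (phi (x t) (b t))
       <= 2 * betat t * mnorm (invmx (LambdaM phi x a b lambda w v t))
                              (phi (x t) (a t) - phi (x t) (b t)).
Proof.
move=> _ HB k0 Hk al0 l0 b0 bt0 _ _ _ Hsel Hw Hv E1 E2 t Ht.
have Hrange : forall i, (1 <= i < t)%N -> (1 <= i <= T)%N.
  move=> i /andP[i1 it]; rewrite i1 /=; case/andP: Ht => _ tT.
  exact: leq_trans (ltnW it) tT.
have w0 : forall i, (1 <= i < t)%N -> 0 <= w i.
  move=> i /Hrange Hi; rewrite (Hw i Hi) /=; case: ifP => // _.
  by rewrite le_min ler01 /= divr_ge0 ?(ltW al0) // /mnorm sqrtr_ge0.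
have v0 : forall i, (1 <= i < t)%N -> 0 <= v i.
  move=> i /Hrange Hi; rewrite (Hv i Hi); apply: le_trans (ltW k0) _.
  by rewrite le_max lexx.
have eS : SigmaM phi x a b lambda kappa w t
        = @Gm R d lambda (fun i => w i * kappa) (dphi phi x a b) t by [].
have eL : LambdaM phi x a b lambda w v t
        = @Gm R d lambda (fun i => w i * v i) (dphi phi x a b) t by [].
have cS : forall u z, `|inner u z| <=
    mnorm (invmx (SigmaM phi x a b lambda kappa w t)) u
    * mnorm (SigmaM phi x a b lambda kappa w t) z.
  have c0 : forall i, (1 <= i < t)%N -> 0 <= w i * kappa.
    by move=> i Hi; rewrite mulr_ge0 ?w0 ?ltW.
  move=> u z; rewrite eS; apply: cs_gen.
  - exact: Gm_sym.
  - by move=> y; apply: Gm_psd (ltW l0) c0.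
  - exact: Gm_unit.
have cL : forall u z, `|inner u z| <=
    mnorm (invmx (LambdaM phi x a b lambda w v t)) u
    * mnorm (LambdaM phi x a b lambda w v t) z.
  have c0 : forall i, (1 <= i < t)%N -> 0 <= w i * v i.
    by move=> i Hi; rewrite mulr_ge0 ?w0 ?v0.
  move=> u z; rewrite eL; apply: cs_gen.
  - exact: Gm_sym.
  - by move=> y; apply: Gm_psd (ltW l0) c0.
  - exact: Gm_unit.
split.
  rewrite (Hv t Ht) ge_max (Hk _ _ _ _ HB) /=.
  apply: dsig_mono.
  set D := dphi phi x a b t.
  set N := mnorm (invmx (SigmaM phi x a b lambda kappa w t)) D.
  have N0 : 0 <= N by rewrite /N /mnorm sqrtr_ge0.
  have eD : phi (x t) (a t) - phi (x t) (b t) = D by [].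
  rewrite eD [X in _ <= X]ger0_norm; last by rewrite addr_ge0 // mulr_ge0 // ltW.
  have -> : inner D thetastar = inner D (theta t) + inner D (thetastar - theta t).
    by rewrite innerBr; lra.
  apply: le_trans (ler_normD _ _) _; rewrite lerD2l.
  apply: le_trans (cS _ _) _; rewrite mulrC.
  by rewrite -/N; apply: (ler_wpM2r N0); exact: E1.
set L := invmx (LambdaM phi x a b lambda w v t).
set Ps := phi (x t) (astar t); set Pa := phi (x t) (a t); set Pb := phi (x t) (b t).
set th := theta t.
have Nge0 : forall u, 0 <= mnorm L u by move=> u; rewrite /mnorm sqrtr_ge0.
have bnd : forall u, inner (thetastar - th) u <= betat t * mnorm L u.
  move=> u; rewrite inner_sym; apply: le_trans (ler_norm _) _.
  apply: le_trans (cL _ _) _; rewrite mulrC; apply: (ler_wpM2r (Nge0 _)).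
  exact: E2.
have s1 := Hsel t Ht (astar t) (b t).
have s2 := Hsel t Ht (astar t) (a t).
have b1 := bnd (Ps - Pa).
have b2 := bnd (Ps - Pb).
rewrite -/Ps -/Pa -/Pb -/th -/L in s1 s2.
move: s1 s2 b1 b2.
have iN : forall u z : 'cV[R]_d, inner (- u) z = - inner u z.
  by move=> u z; rewrite /inner linearN /= mulNmx mxE.
rewrite ?innerDl ?innerBr ?innerBl !iN !(@inner_sym R d thetastar) !(@inner_sym R d th).
set NPab := mnorm L (Pa - Pb); set NPsb := mnorm L (Ps - Pb); set NPsa := mnorm L (Ps - Pa).
have := Nge0 (Ps - Pa); have := Nge0 (Ps - Pb); rewrite -/NPsb -/NPsa.
have := bt0 t.
move=> *; lra.
Qed.
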